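(* Let $(\mathfrak g,[-,-])$ be a Lie algebra and $(\rho,V)$ a representation. Every invertible anti-$\mathcal O$-operator $T:V\to\mathfrak g$ of $(\mathfrak g,[-,-])$ associated to $(\rho,V)$ is strong.
   Context: All vector spaces are finite-dimensional over a field $\mathbb F$ of characteristic $0$. A linear map $T:V\to\mathfrak g$ is an anti-$\mathcal O$-operator associated to a representation $(\rho,V)$ if $[T(u),T(v)]=T(\rho(T(v))u-\rho(T(u))v)$ for all $u,v\in V$; it is strong if moreover $\rho([T(u),T(v)])w+\rho([T(v),T(w)])u+\rho([T(w),T(u)])v=0$ for all $u,v,w\in V$. *)

(* Defs.v *)
From HB Require Import structures.
From mathcomp Require Import all_boot all_order all_algebra.
Set Implicit Arguments. Unset Strict Implicit. Unset Printing Implicit Defensive.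
Import GRing.Theory.
Local Open Scope ring_scope.

Definition is_lie_bracket (F : fieldType) (g : vectType F) (br : g -> g -> g) : Prop :=
  [/\ (forall (a : F) (x y z : g), br (a *: x + y) z = a *: br x z + br y z),
      (forall (a : F) (x y z : g), br z (a *: x + y) = a *: br z x + br z y),
      (forall x : g, br x x = 0) &
      (forall x y z : g, br x (br y z) + br y (br z x) + br z (br x y) = 0)].

Definition is_lie_rep (F : fieldType) (g V : vectType F) (br : g -> g -> g)
  (rho : g -> V -> V) : Prop :=
  [/\ (forall (a : F) (x y : g) (v : V), rho (a *: x + y) v = a *: rho x v + rho y v),
      (forall (a : F) (x : g) (u v : V), rho x (a *: u + v) = a *: rho x u + rho x v) &
      (forall (x y : g) (v : V), rho (br x y) v = rho x (rho y v) - rho y (rho x v))].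

Definition anti_O_operator (F : fieldType) (g V : vectType F) (br : g -> g -> g)
  (rho : g -> V -> V) (T : {linear V -> g}) : Prop :=
  forall u v : V, br (T u) (T v) = T (rho (T v) u - rho (T u) v).

Definition strong_anti_O_operator (F : fieldType) (g V : vectType F) (br : g -> g -> g)
  (rho : g -> V -> V) (T : {linear V -> g}) : Prop :=
  anti_O_operator br rho T /\
  forall u v w : V,
    rho (br (T u) (T v)) w + rho (br (T v) (T w)) u + rho (br (T w) (T u)) v = 0.

(* Main.v *)
Require Import Defs.
From HB Require Import structures.
From mathcomp Require Import all_boot all_order all_algebra.
Import GRing.Theory.
Local Open Scope ring_scope.

Lemma zm (V : zmodType) (p1 p2 p3 p4 p5 p6 : V) :
 (p3 - p4 + (p1 - p6)) + (p5 - p6 + (p3 - p2)) + (p1 - p2 + (p5 - p4)) = (p1-p2+p3-p4+p5-p6)*+2.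
Proof.
rewrite mulr2n.
by rewrite [LHS](AC (((2*2)*(2*2))*(2*2)) ((((((3*8)*1)*2)*5)*4) * (((((9*10)*7)*12)*11)*6)))%AC.
Qed.

Theorem proposition2p17 (F : fieldType) (hF : [pchar F] =i pred0)
  (g V : vectType F) (br : g -> g -> g) (hbr : is_lie_bracket br)
  (rho : g -> V -> V) (hrho : is_lie_rep br rho)
  (T : {linear V -> g}) (hTinv : bijective T) (hT : anti_O_operator br rho T) :
  strong_anti_O_operator br rho T.
Proof.
split => // u v w.
case: hbr => _ _ _ jac.
case: hrho => _ rhoL rhoBr.
have rhoD x a b : rho x (a + b) = rho x a + rho x b.
  by have := rhoL 1 x a b; rewrite !scale1r.
have rho0 x : rho x 0 = 0.
  by apply: (addrI (rho x 0)); rewrite -rhoD !addr0.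
have rhoN x a : rho x (- a) = - rho x a.
  by rewrite -[- a]addr0 -scaleN1r rhoL rho0 addr0 scaleN1r.
have rhoB x a b : rho x (a - b) = rho x a - rho x b by rewrite rhoD rhoN.
have J a b c : br (T a) (br (T b) (T c)) =
   T (rho (br (T b) (T c)) a - rho (T a) (rho (T c) b - rho (T b) c)).
  by rewrite {1}(hT b c) hT -(hT b c).
have Tinj := bij_inj hTinv.
have := jac (T u) (T v) (T w).
rewrite !J -!linearD -(linear0 T) => /Tinj.
rewrite !rhoB !rhoBr !opprB zm => /eqP.
have h2 : (2%:R : F) != 0 by rewrite (pcharf0P _).1.
rewrite -scaler_nat scaler_eq0 (negbTE h2) /= => /eqP H.
rewrite -[RHS]H.
by rewrite [LHS](AC ((2*2)*2) (((((1*2)*3)*4)*5)*6))%AC.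
Qed.
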